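(* Let $\varepsilon\in[0,1)$ and $\mathcal{P},\mathcal{E}\subseteq\mathcal{D}(P)$. (a) If $\mathcal{B}_\varepsilon(\mathcal{P})\cap\mathcal{E}\neq\emptyset$, then $\beta\overline{C}_{\mathrm{TO},\varepsilon}(\mathcal{P},\mathcal{E})=0$, and this zero cost is achieved by a thermal operation of the form $\mathcal{F}(\cdot)=\operatorname{tr}[\cdot]\,\tau$ for a suitable $\tau\in\mathcal{E}$ (discarding the input and preparing $\tau$). (b) If $T(\mathcal{P},\mathcal{E})>\varepsilon$, then $$\beta\overline{C}_{\mathrm{GPL},\varepsilon}(\mathcal{P},\mathcal{E})\ge\log\frac{T(\mathcal{P},\mathcal{E})-\varepsilon}{\operatorname{diam}(\mathcal{E})},$$ with the conventions that $\operatorname{diam}(\mathcal{E})=0$ when $\mathcal{E}$ is a singleton (so the right side is $\log\infty=\infty$).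
   Context: All Hilbert spaces are finite-dimensional; $\mathcal{D}(P)$ is the set of density operators on $P$; $T(X,Y)=\tfrac12\|X-Y\|_1$; $\mathcal{B}_\varepsilon(\mathcal{P})=\{\omega\in\mathcal{D}:T(\omega,\rho)\le\varepsilon\text{ for some }\rho\in\mathcal{P}\}$; $T(\mathcal{P},\mathcal{E})=\inf_{\rho\in\mathcal{P},\tau\in\mathcal{E}}T(\rho,\tau)$; $\operatorname{diam}(\mathcal{E})=\sup_{\tau,\tau'\in\mathcal{E}}T(\tau,\tau')$. Battery: qubit $B$ with basis $\{|0\rangle,|1\rangle\}$, $\pi_M=(1-\tfrac1M)|0\rangle\langle0|+\tfrac1M|1\rangle\langle1|$ for $M>1$, $\Pi_M=\{\pi_{M'}:M'\in[M,\infty)\}$. The one-shot work cost from a dirty battery under a class $\mathfrak{F}$ is $\beta\overline{C}_{\mathfrak{F},\varepsilon}(\mathcal{P},\mathcal{E})=\log\inf\{M>1:\exists\mathcal{F}\in\mathfrak{F}\text{ with }T(\mathcal{F}(|1\rangle\langle1|),\rho)\le\varepsilon\text{ for some }\rho\in\mathcal{P}\text{ and }\mathcal{F}(\sigma)\in\mathcal{E}\ \forall\sigma\in\Pi_M\}$ (with $\log\inf\emptyset=+\infty$). GPL is the class of all linear maps (Gibbs preservation being the condition $\mathcal{F}(\Pi_M)\subseteq\mathcal{E}$); TO is the class of thermal operations, i.e. maps $\rho\mapsto\operatorname{tr}_{\text{rest}}[U(\rho\otimes\tau^E)U^\dagger]$ with $\tau^E$ an ancilla Gibbs state and $U$ energy-conserving;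 replacer maps $\operatorname{tr}[\cdot]\tau$ are thermal operations (taking an ancilla with Gibbs state $\tau$ and $U=I$). *)

(* Defs.v *)
From HB Require Import structures.
From mathcomp Require Import all_boot all_order all_algebra.
From mathcomp Require Import sesquilinear spectral.
From mathcomp Require Import complex.
From mathcomp Require mxtens.
From mathcomp Require Import all_classical all_reals.
From mathcomp Require Import ereal topology normedtype sequences exp.

Set Implicit Arguments.
Unset Strict Implicit.
Unset Printing Implicit Defensive.

Import Order.TTheory GRing.Theory Num.Theory.
Local Open Scope ring_scope.
Local Open Scope classical_set_scope.
Local Open Scope sesquilinear_scope.
Local Open Scope complex_scope.

Section QDefs.
Variable R : realType.
Local Notation C := R[i].

Definition adj m n (A : 'M[C]_(m, n)) : 'M[C]_(n, m) := A ^t*.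

(* positive semidefinite matrices (order on C: 0 <= z iff z is real nonneg) *)
Definition psdmx n (A : 'M[C]_n) : Prop :=
  forall v : 'rV[C]_n, 0 <= (v *m A *m adj v) 0 0.

Definition density n : set 'M[C]_n := [set A | psdmx A /\ \tr A = 1].

Definition psd_sqrt n (A : 'M[C]_n) : 'M[C]_n :=
  xget 0 [set B | psdmx B /\ B *m B = A].
Definition trnorm n (A : 'M[C]_n) : R :=
  complex.Re (\tr (psd_sqrt (adj A *m A))).

Definition tdist n (X Y : 'M[C]_n) : R := trnorm (X - Y) / 2.

Definition ball_set n (eps : R) (P : set 'M[C]_n) : set 'M[C]_n :=
  [set w | density w /\ exists rho, P rho /\ tdist w rho <= eps].

Definition tdist_sets n (P E : set 'M[C]_n) : \bar R :=
  ereal_inf [set x | exists rho tau, P rho /\ E tau /\ x = (tdist rho tau)%:E].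
Definition diam_set n (E : set 'M[C]_n) : \bar R :=
  ereal_sup [set x | exists tau tau', E tau /\ E tau' /\ x = (tdist tau tau')%:E].

Definition ket1bra1 : 'M[C]_2 := delta_mx 1 1.
Definition piM (M : R) : 'M[C]_2 :=
  \matrix_(i, j) if i == j then
                   (if i == 0 then (1 - M^-1)%:C else (M^-1)%:C) else 0.
Definition PiM (M : R) : set 'M[C]_2 := [set s | exists M', M <= M' /\ s = piM M'].

Definition feasible n (eps : R) (P E : set 'M[C]_n) (M : R)
  (F : 'M[C]_2 -> 'M[C]_n) : Prop :=
  (exists rho, P rho /\ tdist (F ket1bra1) rho <= eps) /\
  (forall s, PiM M s -> E (F s)).

(* one-shot work cost from a dirty battery, beta * C-bar (log inf, log inf0 = +oo) *)
Definition work_cost n (cls : set ('M[C]_2 -> 'M[C]_n)) (eps : R)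
  (P E : set 'M[C]_n) : \bar R :=
  let S := [set M : R | 1 < M /\ exists F, cls F /\ feasible eps P E M F] in
  if `[< S = set0 >] then +oo%E else (ln (inf S))%:E.

Definition GPL n : set ('M[C]_2 -> 'M[C]_n) := [set F | linear F].

(* Hamiltonians are given by spectral data: H = W^dagger diag(h) W with W unitary.
   The ancilla energies may be +oo (None), so that its Gibbs state may be rank
   deficient.  beta is the inverse temperature. *)
Definition gibbs_weight (beta : R) (x : option R) : R :=
  if x is Some y then expR (- (beta * y)) else 0.

Definition gibbs_state (beta : R) e (V : 'M[C]_e) (E : 'I_e -> option R) : 'M[C]_e :=
  let w := fun j => gibbs_weight beta (E j) in
  let Z := \sum_j w j in
  adj V *m diag_mx (\row_j (w j / Z)%:C) *m V.

Definition tens m n p q (A : 'M[C]_(m, n)) (B : 'M[C]_(p, q)) : 'M[C]_(m * p, n * q) :=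
  mxtens.tensmx A B.

Definition ptrace n r (X : 'M[C]_(n * r)) : 'M[C]_n :=
  \matrix_(i, k) \sum_(j < r) X (mxtens.mxtens_index (i, j)) (mxtens.mxtens_index (k, j)).

Definition tot_energy e (hB : 'I_2 -> R) (E : 'I_e -> option R) (k : 'I_(2 * e)) : option R :=
  let ij := mxtens.mxtens_unindex k in
  if E ij.2 is Some x then Some (hB ij.1 + x) else None.

(* U commutes with H_B (x) I + I (x) H_E: block diagonal in the energy eigenbasis *)
Definition energy_conserving e (WB : 'M[C]_2) (hB : 'I_2 -> R)
  (V : 'M[C]_e) (E : 'I_e -> option R) (U : 'M[C]_(2 * e)) : Prop :=
  let X := tens WB V in
  forall k l, tot_energy hB E k <> tot_energy hB E l -> (X *m U *m adj X) k l = 0.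

Definition thermal_op n (beta : R) (WB : 'M[C]_2) (hB : 'I_2 -> R) :
  set ('M[C]_2 -> 'M[C]_n) :=
  [set F | exists (e r : nat) (V : 'M[C]_e) (E : 'I_e -> option R)
             (U : 'M[C]_(2 * e)) (sig : 'I_(n * r) -> 'I_(2 * e)),
     [/\ (V \is unitarymx /\ U \is unitarymx), (exists j, E j <> None),
         energy_conserving WB hB V E U, bijective sig &
         forall rho, F rho =
           ptrace (\matrix_(k, l)
             (U *m tens rho (gibbs_state beta V E) *m adj U) (sig k) (sig l))]].

Definition replacer n (tau : 'M[C]_n) : 'M[C]_2 -> 'M[C]_n := fun s => \tr s *: tau.

Definition rhs_b n (eps : R) (P E : set 'M[C]_n) : \bar R :=
  if diam_set E == 0%E then +oo%E
  else (ln (fine (tdist_sets P E - eps%:E) / fine (diam_set E)))%:E.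

End QDefs.

Arguments density {R} n _.
Arguments GPL {R} n _.
Arguments thermal_op {R} n beta WB hB _.

(* Main.v *)
Require Import Defs.
From HB Require Import structures.
From mathcomp Require Import all_boot all_order all_algebra.
From mathcomp Require Import sesquilinear spectral.
From mathcomp Require Import complex.
From mathcomp Require mxtens.
From mathcomp Require Import all_classical all_reals.
From mathcomp Require Import ereal topology normedtype sequences exp.
From mathcomp Require Import ring lra.

Set Implicit Arguments.
Unset Strict Implicit.
Unset Printing Implicit Defensive.

Import Order.TTheory GRing.Theory Num.Theory Num.Def.
Local Open Scope ring_scope.
Local Open Scope classical_set_scope.
Section S.
Variable R : realType.
Local Notation C := R[i].
Local Open Scope sesquilinear_scope.
Definition qf n (A : 'M[C]_n) (u w : 'rV[C]_n) : C := (u *m A *m w^t*) 0 0.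
Lemma qfDl n (A : 'M[C]_n) u1 u2 w : qf A (u1 + u2) w = qf A u1 w + qf A u2 w.
Proof. by rewrite /qf !mulmxDl mxE. Qed.
Lemma qfDr n (A : 'M[C]_n) u w1 w2 : qf A u (w1 + w2) = qf A u w1 + qf A u w2.
Proof. by rewrite /qf linearD /= map_mxD !mulmxDr mxE. Qed.
Lemma qfZl n (A : 'M[C]_n) c u w : qf A (c *: u) w = c * qf A u w.
Proof. by rewrite /qf -!scalemxAl mxE. Qed.
Lemma qfZr n (A : 'M[C]_n) c u w : qf A u (c *: w) = c^* * qf A u w.
Proof. by rewrite /qf linearZ /= map_mxZ -scalemxAr mxE. Qed.
Lemma qfE n (A : 'M[C]_n) i j : qf A (delta_mx 0 i) (delta_mx 0 j) = A i j.
Proof.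
rewrite /qf trmx_delta map_delta_mx -rowE -colE !mxE //.
Qed.
Lemma psd_real n (A : 'M[C]_n) u : psdmx A -> qf A u u \is Num.real.
Proof. by move=> /(_ u) h; apply: ger0_real. Qed.
Lemma psd_herm n (A : 'M[C]_n) : psdmx A -> forall i j, A j i = (A i j)^*.
Proof.
move=> hA i j.
set ei : 'rV[C]_n := delta_mx 0 i; set ej : 'rV[C]_n := delta_mx 0 j.
have h1 := psd_real (ei + ej) hA.
have h2 := psd_real (ei + 'i *: ej) hA.
have hi := psd_real ei hA; have hj := psd_real ej hA.
move: h1 h2 hi hj; rewrite !qfDl !qfDr !qfZl !qfZr !qfE.
rewrite !CrealE => /eqP h1 /eqP h2 /eqP hi /eqP hj.
move: h1 h2; rewrite !rmorphD !rmorphM /= !conjCK ?hi ?hj.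
rewrite conjCi => h1 h2.
have e1 : (A i j)^* + (A j i)^* = A i j + A j i.
  apply/eqP; rewrite -subr_eq0; move/eqP: h1; rewrite -subr_eq0 => /eqP h1.
  by rewrite -h1; apply/eqP; ring.
have e2 : 'i * (A i j)^* - 'i * (A j i)^* = - 'i * A i j + 'i * A j i.
  apply/eqP; rewrite -subr_eq0; move/eqP: h2; rewrite -subr_eq0 => /eqP h2.
  by rewrite -h2; apply/eqP; ring.
have : 2%:R * 'i * (A i j)^* = 2%:R * 'i * (A j i).
  have -> : 2%:R * 'i * (A i j)^* = 'i * ((A i j)^* + (A j i)^*) + ('i * (A i j)^* - 'i * (A j i)^*) by ring.
  rewrite e1 e2; ring.
have nz : 2%:R * 'i != 0 :> C by rewrite mulf_neq0 ?pnatr_eq0 ?neq0Ci.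
by move/(mulfI nz).
Qed.
Local Open Scope complex_scope.
Lemma adjM m n p (A : 'M[C]_(m, n)) (B : 'M[C]_(n, p)) : (A *m B)^t* = B^t* *m A^t*.
Proof. by rewrite trmx_mul map_mxM. Qed.
Lemma unitary_l n (W : 'M[C]_n) : W \is unitarymx -> W *m W^t* = 1%:M.
Proof. by move/unitarymxP. Qed.
Lemma unitary_r n (W : 'M[C]_n) : W \is unitarymx -> W^t* *m W = 1%:M.
Proof. by rewrite -trmxC_unitary => /unitarymxP; rewrite trmxCK. Qed.
Definition hermx n (A : 'M[C]_n) := A^t* = A.
Lemma psd_hermx n (A : 'M[C]_n) : psdmx A -> hermx A.
Proof. by move=> hA; apply/matrixP => i j; rewrite !mxE -psd_herm // conjCK. Qed.
Lemma herm_spectral n (A : 'M[C]_n) : hermx A ->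
  exists W (l : 'rV[C]_n), [/\ W \is unitarymx, (forall i, l 0 i \is Num.real) &
     A = W^t* *m diag_mx l *m W].
Proof.
move=> hA.
have hs : A \is hermsymmx by apply/is_hermitianmxP; rewrite expr0 scale1r hA.
have /orthomx_spectralP e := hermitian_normalmx hs.
exists (spectralmx A), (spectral_diag A); split.
- exact: spectral_unitarymx.
- by move=> i; have /mxOverP := hermitian_spectral_diag_real hs; apply.
- by rewrite {1}e invmx_unitary // spectral_unitarymx.
Qed.
Lemma qf_conj n (A : 'M[C]_n) (W : 'M[C]_n) v :
  qf (W^t* *m A *m W) v v = qf A (v *m W^t*) (v *m W^t*).
Proof. by rewrite /qf adjM trmxCK !mulmxA. Qed.
Lemma qf_diag n (d : 'rV[C]_n) u : qf (diag_mx d) u u = \sum_i d 0 i * (u 0 i * (u 0 i)^*).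
Proof.
rewrite /qf mxE; apply: eq_bigr => i _.
by rewrite mul_mx_diag !mxE; ring.
Qed.
Lemma psd_spec n (W : 'M[C]_n) (d : 'rV[C]_n) : (forall i, 0 <= d 0 i) ->
  psdmx (W^t* *m diag_mx d *m W).
Proof.
move=> hd v; rewrite -/(qf _ v v) qf_conj qf_diag.
by apply: sumr_ge0 => i _; apply: mulr_ge0 => //; apply: mul_conjC_ge0.
Qed.
Lemma qfMD n (M1 M2 : 'M[C]_n) u w : qf (M1 + M2) u w = qf M1 u w + qf M2 u w.
Proof. by rewrite /qf mulmxDr mulmxDl mxE. Qed.
Lemma qfMN n (M : 'M[C]_n) u w : qf (- M) u w = - qf M u w.
Proof. by rewrite /qf mulmxN mulNmx mxE. Qed.
Lemma qfMB n (M1 M2 : 'M[C]_n) u w : qf (M1 - M2) u w = qf M1 u w - qf M2 u w.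
Proof. by rewrite qfMD qfMN. Qed.
Lemma hermxB n (A B : 'M[C]_n) : hermx A -> hermx B -> hermx (A - B).
Proof. by rewrite /hermx => hA hB; rewrite linearB /= map_mxB hA hB. Qed.
Lemma hermxD n (A B : 'M[C]_n) : hermx A -> hermx B -> hermx (A + B).
Proof. by rewrite /hermx => hA hB; rewrite linearD /= map_mxD hA hB. Qed.
Lemma delta_diag n (l : 'rV[C]_n) i :
  (delta_mx 0 i : 'rV[C]_n) *m diag_mx l = l 0 i *: delta_mx 0 i.
Proof.
apply/matrixP => a b; rewrite mul_mx_diag !mxE.
by case: (eqVneq b i) => [->|/negPf hb]; rewrite ?hb ?andbF ?mulr0 ?mul0r // mulrC.
Qed.
Lemma psd_sqrt_uniq n (B B' : 'M[C]_n) : psdmx B -> psdmx B' ->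
  B *m B = B' *m B' -> B = B'.
Proof.
move=> hB hB' eBB.
have hH : hermx (B - B') by apply: hermxB; apply: psd_hermx.
have [W [l [uW lr eH]]] := herm_spectral hH.
suff l0 : l = 0.
  by apply/eqP; rewrite -subr_eq0 eH l0 linear0 mulmx0 mul0mx.
apply/rowP => i; rewrite mxE.
set v : 'rV[C]_n := delta_mx 0 i *m W.
have WH : W *m (B - B') = diag_mx l *m W.
  by rewrite eH !mulmxA unitary_l // mul1mx.
have vH : v *m (B - B') = l 0 i *: v.
  by rewrite /v -mulmxA WH mulmxA delta_diag -scalemxAl.
have Hv : (B - B') *m v^t* = l 0 i *: v^t*.
  have := congr1 (fun X => X^t*) vH; rewrite adjM hH => ->.
  rewrite linearZ /= map_mxZ; congr (_ *: _).
  by move: (lr i); rewrite CrealE => /eqP.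
have vv : (v *m v^t*) 0 0 = 1.
  rewrite /v adjM mulmxA -(mulmxA _ W) unitary_l // mulmx1.
  by rewrite trmx_delta map_delta_mx mul_delta_mx mxE.
set p := qf B v v; set q := qf B' v v.
have hp : 0 <= p by apply: hB.
have hq : 0 <= q by apply: hB'.
have lpq : l 0 i = p - q.
  by rewrite /p /q -qfMB /qf vH -scalemxAl mxE vv mulr1.
have e0 : qf ((B + B') *m (B - B')) v v + qf ((B - B') *m (B + B')) v v = 0.
  rewrite mulmxDl !mulmxBr mulmxDr !mulmxBl !qfMD !qfMN.
  rewrite /p /q -/(qf (B *m B) v v) eBB; ring.
have e1 : qf ((B + B') *m (B - B')) v v = l 0 i * qf (B + B') v v.
  by rewrite /qf mulmxA -(mulmxA _ _ (v^t*)) -mulmxA Hv -!scalemxAr mulmxA mxE.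
have e2 : qf ((B - B') *m (B + B')) v v = l 0 i * qf (B + B') v v.
  by rewrite /qf mulmxA vH -!scalemxAl mxE.
move: e0; rewrite e1 e2 qfMD -/p -/q lpq => h.
have : (p - q) * (p + q) *+ 2 == 0 by rewrite mulr2n h.
rewrite mulrn_eq0 /= mulf_eq0 => /orP[/eqP //|].
by rewrite paddr_eq0 // => /andP[/eqP -> /eqP ->]; rewrite subrr.
Qed.
Lemma diag_adj n (l : 'rV[C]_n) : (diag_mx l)^t* = diag_mx (\row_j (l 0 j)^*).
Proof. by rewrite tr_diag_mx map_diag_mx; congr diag_mx; apply/rowP => j; rewrite !mxE. Qed.
End S.
Section S2.
Variable R : realType.
Local Notation C := R[i].
Local Open Scope sesquilinear_scope.
Local Open Scope complex_scope.
Lemma conj_spec n (W : 'M[C]_n) (a b : 'rV[C]_n) : W \is unitarymx ->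
  (W^t* *m diag_mx a *m W) *m (W^t* *m diag_mx b *m W) =
   W^t* *m diag_mx (\row_j (a 0 j * b 0 j)) *m W.
Proof.
move=> uW. rewrite -mulmx_diag. rewrite !mulmxA.
rewrite -(mulmxA (W^t* *m diag_mx a) W). rewrite (unitary_l uW). by rewrite mulmx1.
Qed.
Lemma adj_spec n (W D : 'M[C]_n) : (W^t* *m D *m W)^t* = W^t* *m D^t* *m W.
Proof. by rewrite !adjM trmxCK mulmxA. Qed.
Lemma trnorm_spec n (W : 'M[C]_n) (l : 'rV[C]_n) : W \is unitarymx ->
  (forall i, l 0 i \is Num.real) ->
  (trnorm (W^t* *m diag_mx l *m W))%:C = \sum_i `|l 0 i|.
Proof.
move=> uW lr.
set s : 'rV[C]_n := \row_i `|l 0 i|.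
set B := W^t* *m diag_mx s *m W.
have pB : psdmx B by apply: psd_spec => i; rewrite mxE.
have eB : B *m B = adj (W^t* *m diag_mx l *m W) *m (W^t* *m diag_mx l *m W).
  rewrite /adj adj_spec diag_adj !(conj_spec _ _ uW).
  congr (_ *m diag_mx _ *m _); apply/rowP => j; rewrite !mxE -expr2 normCK mulrC.
  done.
rewrite /trnorm /psd_sqrt.
set S := [set B0 | _].
have hSB : S B by split.
have [p0 e0] := xgetPex 0 (ex_intro _ B hSB).
rewrite (psd_sqrt_uniq p0 pB (etrans e0 (esym eB))).
rewrite /B mxtrace_mulC mulmxA (unitary_l uW) mul1mx mxtrace_diag.
rewrite RRe_real //; last first.
  by apply: ger0_real; apply: sumr_ge0 => i _; rewrite mxE.
by apply: eq_bigr => i _; rewrite mxE.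
Qed.
End S2.
Section S3.
Variable R : realType.
Local Notation C := R[i].
Local Open Scope sesquilinear_scope.
Local Open Scope complex_scope.
Lemma trace_diag n (M : 'M[C]_n) (l : 'rV[C]_n) :
  \tr (M *m diag_mx l) = \sum_i M i i * l 0 i.
Proof. by rewrite /mxtrace; apply: eq_bigr => i _; rewrite mul_mx_diag mxE. Qed.
Lemma diag_bound n (K : 'M[C]_n) (sg : 'rV[C]_n) i :
  K *m K^t* = 1%:M -> (forall k, `|sg 0 k| <= 1) ->
  `|(K *m diag_mx sg *m K^t*) i i| <= 1.
Proof.
move=> uK hs.
have -> : (K *m diag_mx sg *m K^t*) i i = \sum_k sg 0 k * (K i k * (K i k)^*).
  by rewrite mxE; apply: eq_bigr => k _; rewrite mul_mx_diag !mxE; ring.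
have e1 : \sum_k (K i k * (K i k)^*) = 1.
  by move/matrixP: uK => /(_ i i); rewrite !mxE eqxx mulr1n => <-; apply: eq_bigr => k _; rewrite !mxE.
apply: le_trans (ler_norm_sum _ _ _) _.
rewrite -e1; apply: ler_sum => k _; rewrite normrM.
rewrite [X in _ * X <= _]ger0_norm ?mul_conjC_ge0 //.
rewrite -[X in _ <= X]mul1r; apply: ler_wpM2r => //; exact: mul_conjC_ge0.
Qed.
Lemma trace_bound n (U W : 'M[C]_n) (l sg : 'rV[C]_n) :
  U \is unitarymx -> W \is unitarymx -> (forall k, `|sg 0 k| <= 1) ->
  `|\tr ((W^t* *m diag_mx sg *m W) *m (U^t* *m diag_mx l *m U))| <= \sum_i `|l 0 i|.
Proof.
move=> uU uW hs.
set K := U *m W^t*.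
have uK : K *m K^t* = 1%:M.
  rewrite /K adjM trmxCK mulmxA -(mulmxA U) (unitary_r uW) mulmx1 (unitary_l uU) //.
have -> : \tr ((W^t* *m diag_mx sg *m W) *m (U^t* *m diag_mx l *m U)) =
          \tr ((K *m diag_mx sg *m K^t*) *m diag_mx l).
  by rewrite /K adjM trmxCK !mulmxA [in LHS]mxtrace_mulC !mulmxA.
rewrite trace_diag; apply: le_trans (ler_norm_sum _ _ _) _.
apply: ler_sum => i _; rewrite normrM.
rewrite -[X in _ <= X]mul1r; apply: ler_wpM2r => //; exact: diag_bound.
Qed.
Lemma trnorm_ge0 n (X : 'M[C]_n) : hermx X -> 0 <= trnorm X.
Proof.
move=> hX; have [W [l [uW lr ->]]] := herm_spectral hX.
by rewrite -ler0c trnorm_spec // sumr_ge0.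
Qed.
Lemma trnorm_triangle n (X Y : 'M[C]_n) : hermx X -> hermx Y ->
  trnorm (X + Y) <= trnorm X + trnorm Y.
Proof.
move=> hX hY.
have [W [nu [uW nur eZ]]] := herm_spectral (hermxD hX hY).
have [U [l [uU lr eX]]] := herm_spectral hX.
have [V [m [uV mr eY]]] := herm_spectral hY.
set sg : 'rV[C]_n := \row_j (if 0 <= nu 0 j then 1 else -1).
have hsg : forall k, `|sg 0 k| <= 1.
  by move=> k; rewrite mxE; case: ifP; rewrite ?normrN normr1.
set S := W^t* *m diag_mx sg *m W.
have e1 : \sum_i `|nu 0 i| = \tr (S *m (X + Y)).
  rewrite eZ /S (conj_spec _ _ uW) mxtrace_mulC mulmxA (unitary_l uW) mul1mx mxtrace_diag.
  apply: eq_bigr => j _; rewrite !mxE; case: ifP => h.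
    by rewrite mul1r ger0_norm.
  have : nu 0 j < 0 by rewrite real_ltNge ?h ?real0 ?nur.
  by move=> /ltr0_norm ->; rewrite mulN1r.
have tZ := trnorm_spec uW nur; rewrite -eZ in tZ.
have tX := trnorm_spec uU lr; rewrite -eX in tX.
have tY := trnorm_spec uV mr; rewrite -eY in tY.
rewrite -lecR rmorphD /= tZ tX tY e1 mulmxDr mxtraceD.
rewrite -[X in X <= _]ger0_norm; last first.
  by rewrite -mxtraceD -mulmxDr -e1 sumr_ge0.
apply: le_trans (ler_normD _ _) _.
apply: lerD; [rewrite {1}eX /S | rewrite {1}eY /S]; (apply: trace_bound; [assumption|exact uW|exact hsg]).
Qed.
Lemma trnorm_scale n (c : R) (X : 'M[C]_n) : hermx X -> 0 <= c ->
  trnorm (c%:C *: X) = c * trnorm X.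
Proof.
move=> hX hc; have [U [l [uU lr eX]]] := herm_spectral hX.
have e : c%:C *: X = U^t* *m diag_mx (c%:C *: l) *m U.
  by rewrite eX linearZ /= -scalemxAr -scalemxAl.
have tX := trnorm_spec uU lr; rewrite -eX in tX.
have lr' : forall i, (c%:C *: l) 0 i \is Num.real.
  by move=> i; rewrite mxE rpredM ?complex_real ?lr.
have tcX := trnorm_spec uU lr'; rewrite -e in tcX.
apply: complexI; rewrite rmorphM /= tcX tX.
rewrite mulr_sumr; apply: eq_bigr => i _; rewrite mxE normrM ger0_norm //.
by rewrite ler0c.
Qed.
End S3.
Section S4.
Variable R : realType.
Local Notation C := R[i].
Local Open Scope sesquilinear_scope.
Local Open Scope complex_scope.
Lemma lim_arg (M t d : R) : 1 < M -> 0 <= t ->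
  (forall M', M <= M' -> (M^-1 - M'^-1) * t <= d) -> t / M <= d.
Proof.
move=> hM ht H; rewrite leNgt; apply/negP => h.
set e := t / M - d.
have he : 0 < e by rewrite subr_gt0.
have hM0 : 0 < M by apply: lt_trans hM.
have te : 0 <= t / e by apply: divr_ge0 => //; apply: ltW.
set M' := M + t / e + 1.
have hM' : M <= M' by rewrite /M' -addrA lerDl addr_ge0.
have hM'0 : 0 < M' by apply: lt_le_trans hM'.
have := H M' hM'.
rewrite mulrBl -!/(_ / _) [M^-1 * t]mulrC [M'^-1 * t]mulrC.
have -> : t / M - t / M' <= d = (e <= t / M') by rewrite /e lerBlDr addrC -lerBlDr.
rewrite ler_pdivlMr // /M' !mulrDr mulrCA divff ?gt_eqF // mulr1.
apply/negP; rewrite -ltNge; have := mulr_gt0 he hM0; lra.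
Qed.
Lemma ord2 (i : 'I_2) : i = 0 \/ i = 1.
Proof. by case: i => [[|[|//]] hi]; [left|right]; apply/val_inj. Qed.
Lemma piM_dec (M : R) : piM M = delta_mx 0 0 + (M^-1)%:C *: (ket1bra1 R - delta_mx 0 0).
Proof.
apply/matrixP => i j; rewrite /ket1bra1 !mxE.
by case: (ord2 i) => ->; case: (ord2 j) => ->; rewrite /= ?rmorphB ?rmorph1; ring.
Qed.
Lemma linFD n (F : 'M[C]_2 -> 'M[C]_n) : linear F -> forall u v, F (u + v) = F u + F v.
Proof. by move=> hF u v; have := hF 1 u v; rewrite !scale1r. Qed.
Lemma linF0 n (F : 'M[C]_2 -> 'M[C]_n) : linear F -> F 0 = 0.
Proof. by move=> hF; have h := linFD hF 0 0; rewrite addr0 in h; apply: (addrI (F 0)); rewrite addr0 -h. Qed.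
Lemma linFZ n (F : 'M[C]_2 -> 'M[C]_n) : linear F -> forall a u, F (a *: u) = a *: F u.
Proof. by move=> hF a u; have := hF a u 0; rewrite (linF0 hF) !addr0. Qed.
Lemma linFB n (F : 'M[C]_2 -> 'M[C]_n) : linear F -> forall u v, F (u - v) = F u - F v.
Proof. by move=> hF u v; rewrite linFD // -scaleN1r linFZ // scaleN1r. Qed.
Lemma density_herm n (X : 'M[C]_n) : density n X -> hermx X.
Proof. by case=> h _; apply: psd_hermx. Qed.
Lemma hermxZ n (r : R) (X : 'M[C]_n) : hermx X -> hermx (r%:C *: X).
Proof. by rewrite /hermx => hX; rewrite linearZ /= map_mxZ hX /= (conjc_real r : conjC r%:C = r%:C). Qed.
Lemma trnormN n (X : 'M[C]_n) : trnorm (- X) = trnorm X.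
Proof.
rewrite /trnorm; have -> : adj (- X) = - adj X by apply/matrixP => i j; rewrite !mxE rmorphN.
by rewrite mulNmx mulmxN opprK.
Qed.
Lemma tdist_sym n (X Y : 'M[C]_n) : tdist X Y = tdist Y X.
Proof. by rewrite /tdist -opprB trnormN. Qed.
Lemma keyb n eps (P E : set 'M[C]_n) (M : R) F : P `<=` density n -> E `<=` density n ->
  1 < M -> linear F -> feasible eps P E M F ->
  exists t : R, [/\ 0 <= t, (tdist_sets P E <= (eps + (1 - M^-1) * t)%:E)%E &
    forall M', M <= M' -> (((M^-1 - M'^-1) * t)%:E <= diam_set E)%E].
Proof.
move=> hP hE hM hF [[rho [Prho hrho]] hPi].
have hM0 : 0 < M by apply: lt_trans hM.
set e0 : 'M[C]_2 := delta_mx 0 0.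
set G := F (ket1bra1 R) - F e0.
have FP : forall M', F (piM M') = F e0 + (M'^-1)%:C *: G.
  by move=> M0; rewrite piM_dec (linFD hF) (linFZ hF) (linFB hF).
have EP : forall M', M <= M' -> E (F (piM M')) by move=> M' h; apply: hPi; exists M'.
have HP : forall M', M <= M' -> hermx (F (piM M')).
  by move=> M' h; apply: density_herm; apply: hE; apply: EP.
have dif : forall M', F (piM M) - F (piM M') = (M^-1 - M'^-1)%:C *: G.
  by move=> M'; apply/matrixP => i j; rewrite !FP !mxE rmorphB /=; ring.
have hM2 : M <= M * 2 by rewrite ler_peMr ?ler1n // ltW.
set c := M^-1 - (M * 2)^-1.
have c0 : c != 0.
  rewrite gt_eqF // /c subr_gt0 ltf_pV2 ?posrE ?mulr_gt0 //.
  by rewrite ltr_pMr // ltr1n.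
have hG : hermx G.
  have -> : G = (c^-1)%:C *: (c%:C *: G) by rewrite scalerA -rmorphM /= mulVf // scale1r.
  by apply: hermxZ; rewrite -dif; apply: hermxB; apply: HP.
have ha : F (ket1bra1 R) = F (piM M) + (1 - M^-1)%:C *: G.
  by apply/matrixP => i j; rewrite FP /G !mxE rmorphB /=; ring.
have hrh : hermx rho by apply: density_herm; apply: hP.
have hGn := trnorm_ge0 hG.
exists (trnorm G / 2); split.
- by apply: divr_ge0.
- apply: le_trans (ereal_inf_lbound _) _; first by exists rho, (F (piM M)); split; [|split; [apply: EP|]].
  rewrite lee_fin /tdist.
  have -> : rho - F (piM M) = (rho - F (ket1bra1 R)) + (1 - M^-1)%:C *: G.
    by rewrite ha opprD addrA subrK.
  have he1 : hermx (F (ket1bra1 R)).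
    by rewrite ha; apply: hermxD; [apply: HP|apply: hermxZ].
  have h1 := trnorm_triangle (hermxB hrh he1) (hermxZ (1 - M^-1) hG).
  have k0 : 0 <= 1 - M^-1 by rewrite subr_ge0 ltW // invf_lt1.
  rewrite (trnorm_scale hG k0) in h1.
  move: hrho; rewrite tdist_sym /tdist mulrA => h2.
  move: h1 h2; set kg := (1 - M^-1) * trnorm G.
  set a := trnorm _; set b := trnorm _.
  move=> h1 h2; lra.
- move=> M' hM'.
  have hM'0 : 0 < M' by apply: lt_le_trans hM'.
  have hS : [set x | exists tau tau', E tau /\ E tau' /\ x = (tdist tau tau')%:E]
     (tdist (F (piM M)) (F (piM M')))%:E.
    by exists (F (piM M)), (F (piM M')); split; [apply: EP|split; [apply: EP|]].
  have := @ereal_sup_ubound R _ _ hS; rewrite /diam_set; apply: le_trans.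
  have k0 : 0 <= M^-1 - M'^-1 by rewrite subr_ge0 lef_pV2 ?posrE.
  by rewrite lee_fin /tdist dif (trnorm_scale hG k0) mulrA.
Qed.
End S4.
Section S5.
Variable R : realType.
Local Notation C := R[i].
Local Open Scope sesquilinear_scope.
Local Open Scope complex_scope.
Lemma partb n (eps : R) (P E : set 'M[C]_n) : 0 <= eps ->
  P `<=` density n -> E `<=` density n ->
  (eps%:E < tdist_sets P E)%E ->
  (rhs_b eps P E <= work_cost (GPL n) eps P E)%E.
Proof.
move=> he hP hE hT.
rewrite /work_cost /=.
set S := [set M : R | 1 < M /\ exists F, GPL n F /\ feasible eps P E M F].
case: ifPn => [_|/asboolPn hS]; first exact: leey.
have [M0 SM0] : S !=set0 by apply/set0P/eqP.
have key : forall M, S M -> exists t : R, [/\ 0 <= t, (tdist_sets P E <= (eps + (1 - M^-1) * t)%:E)%E &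
    forall M', M <= M' -> (((M^-1 - M'^-1) * t)%:E <= diam_set E)%E].
  by move=> M [hM [F [hF hfe]]]; apply: (keyb hP hE hM hF hfe).
have S1 : forall M, S M -> 1 < M by move=> M [].
have iS : 1 <= inf S.
  by apply: lb_le_inf; [exists M0 | move=> x /S1 /ltW].
rewrite /rhs_b.
move: hT key; generalize (tdist_sets P E) (diam_set E) => T D hT key.
have [t0 [t00 hT0 hD0]] := key M0 SM0.
have hM0 := S1 M0 SM0.
have hM00 : 0 < M0 by apply: lt_trans hM0.
case: T hT hT0 key => [T0| |] //.
move=> hT hT0 key; rewrite lte_fin in hT.
have c0 : 0 < M0^-1 - (M0 * 2)^-1.
  rewrite subr_gt0 ltf_pV2 ?posrE ?mulr_gt0 //.
  by rewrite ltr_pMr // ltr1n.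
have hM2 : M0 <= M0 * 2 by rewrite ler_peMr ?ler1n // ltW.
have hD2 := hD0 (M0 * 2) hM2.
case: D hD0 hD2 key => [d| |] hD0 hD2 key; last 2 first.
- by rewrite /= invr0 mulr0 ln0 // lee_fin ln_ge0.
- by rewrite /= invr0 mulr0 ln0 // lee_fin ln_ge0.
rewrite lee_fin in hD2.
have ct0 : 0 <= (M0^-1 - (M0 * 2)^-1) * t0 by rewrite mulr_ge0 // ltW.
case: ifPn => [/eqP [] d0 | dn0].
  exfalso; move: hD2; rewrite d0 pmulr_rle0 // => t0n.
  have t0z : t0 = 0 by apply/eqP; rewrite eq_le t0n t00.
  by move: hT0; rewrite t0z mulr0 addr0 lee_fin leNgt hT.
have dpos : 0 < d.
  rewrite lt_def (le_trans ct0 hD2) andbT; apply: contra dn0 => /eqP ->; done.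
rewrite /= lee_fin ler_ln ?posrE; last 2 first.
- by rewrite divr_gt0 // subr_gt0.
- by apply: lt_le_trans iS.
apply: lb_le_inf; first by exists M0.
move=> M SM; have hM := S1 M SM; have hM' : 0 < M by apply: lt_trans hM.
have [t [ht hTM hDM]] := key M SM.
have hl : t / M <= d.
  by apply: lim_arg => // M' hM'; rewrite -lee_fin; apply: hDM.
rewrite ler_pdivrMr // in hl.
rewrite ler_pdivrMr //.
move: hTM; rewrite lee_fin mulrBl mul1r => hTM.
have hMt : 0 <= M^-1 * t by rewrite mulr_ge0 // invr_ge0 ltW.
rewrite [M * d]mulrC; lra.
Qed.
End S5.
Section S6.
Variable R : realType.
Local Notation C := R[i].
Local Open Scope sesquilinear_scope.
Local Open Scope complex_scope.
Lemma tens_adj m n p q (A : 'M[C]_(m, n)) (B : 'M[C]_(p, q)) :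
  (tens A B)^t* = tens (A^t*) (B^t*).
Proof.
apply/matrixP => i j.
case: (mxtens.mxtens_indexP i) => i1 i2; case: (mxtens.mxtens_indexP j) => j1 j2.
by rewrite /tens !mxE !mxtens.mxtens_indexK /= rmorphM.
Qed.
Lemma tens11 m p : tens (1%:M : 'M[C]_m) (1%:M : 'M[C]_p) = 1%:M.
Proof.
apply/matrixP => i j.
case: (mxtens.mxtens_indexP i) => i1 i2; case: (mxtens.mxtens_indexP j) => j1 j2.
rewrite /tens mxtens.tensmxE !mxE (inj_eq (can_inj (@mxtens.mxtens_indexK _ _))).
by rewrite xpair_eqE -natrM mulnb.
Qed.
Lemma tens_unitary m p (A : 'M[C]_m) (B : 'M[C]_p) :
  A \is unitarymx -> B \is unitarymx -> tens A B \is unitarymx.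
Proof.
move=> uA uB; apply/unitarymxP.
by rewrite tens_adj /tens mxtens.tensmx_mul (unitary_l uA) (unitary_l uB) -/(tens _ _) tens11.
Qed.
Lemma spec_diag_ge0 n (tau W : 'M[C]_n) (l : 'rV[C]_n) : psdmx tau -> W \is unitarymx ->
  tau = W^t* *m diag_mx l *m W -> forall j, 0 <= l 0 j.
Proof.
move=> ptau uW etau j.
have e : W *m tau *m W^t* = diag_mx l.
  by rewrite etau !mulmxA (unitary_l uW) mul1mx -mulmxA (unitary_l uW) mulmx1.
have : l 0 j = qf tau (delta_mx 0 j *m W) (delta_mx 0 j *m W).
  by rewrite /qf adjM !mulmxA -(mulmxA _ W) -(mulmxA _ (W *m tau)) -/(qf _ _ _) qfE e mxE eqxx mulr1n.
by move=> ->; apply: ptau.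
Qed.
Lemma spec_trace n (tau W : 'M[C]_n) (l : 'rV[C]_n) : W \is unitarymx ->
  tau = W^t* *m diag_mx l *m W -> \tr tau = \sum_j l 0 j.
Proof.
by move=> uW ->; rewrite mxtrace_mulC mulmxA (unitary_l uW) mul1mx mxtrace_diag.
Qed.
Definition Egf (beta : R) n (l : 'rV[C]_n) (j : 'I_n) :=
  if 0 < complex.Re (l 0 j) then Some (- ln (complex.Re (l 0 j)) / beta) else None.
Lemma gibbs_spec (beta : R) n (W : 'M[C]_n) (l : 'rV[C]_n) : 0 < beta ->
  (forall j, l 0 j \is Num.real) -> (forall j, 0 <= l 0 j) -> \sum_j l 0 j = 1 ->
  let Eg := Egf beta l in
  gibbs_state beta W Eg = W^t* *m diag_mx l *m W /\ exists j, Eg j <> None.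
Proof.
move=> hb lr l0 sl Eg.
set re := fun j => complex.Re (l 0 j).
have reC : forall j, (re j)%:C = l 0 j by move=> j; apply: RRe_real.
have re0 : forall j, 0 <= re j by move=> j; rewrite -lecR reC.
have sre : \sum_j re j = 1.
  by apply: complexI; rewrite rmorph_sum /=; under eq_bigr do rewrite reC.
have gw : forall j, gibbs_weight beta (Eg j) = re j.
  move=> j; rewrite /Eg /Egf -/(re j); case: ifPn => h /=.
    rewrite mulrCA divff ?gt_eqF // mulr1 opprK lnK //.
  by apply/eqP; rewrite eq_le re0 /= leNgt h.
split.
  rewrite /gibbs_state /adj; congr (_ *m diag_mx _ *m _); apply/rowP => j.
  by rewrite !mxE gw (eq_bigr _ (fun j _ => gw j)) sre divr1 reC.
case: (pselect (exists j, 0 < re j)) => [[j hj]|hn].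
  by exists j; rewrite /Eg /Egf -/(re j) hj.
have : \sum_j re j <= 0.
  by apply: sumr_le0 => j _; rewrite leNgt; apply/negP => h; apply: hn; exists j.
by rewrite sre ler10.
Qed.
Definition swapi n : 'I_(n * 2) -> 'I_(2 * n) :=
  fun k => mxtens.mxtens_index ((mxtens.mxtens_unindex k).2, (mxtens.mxtens_unindex k).1).
Definition swapi' n : 'I_(2 * n) -> 'I_(n * 2) :=
  fun k => mxtens.mxtens_index ((mxtens.mxtens_unindex k).2, (mxtens.mxtens_unindex k).1).
Lemma swapi_bij n : bijective (@swapi n).
Proof.
exists (@swapi' n) => k; case: (mxtens.mxtens_indexP k) => i j;
  by rewrite /swapi /swapi' !mxtens.mxtens_indexK.
Qed.
Lemma replacer_TO n (beta : R) (WB : 'M[C]_2) (hB : 'I_2 -> R) (tau : 'M[C]_n) :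
  0 < beta -> WB \is unitarymx -> density n tau -> thermal_op n beta WB hB (replacer tau).
Proof.
move=> hb uWB [ptau ttau].
have [W [l [uW lr etau]]] := herm_spectral (psd_hermx ptau).
have l0 := spec_diag_ge0 ptau uW etau.
have sl : \sum_j l 0 j = 1 by rewrite -(spec_trace uW etau).
have [eg [j hj]] := gibbs_spec W hb lr l0 sl.
rewrite -etau in eg.
have u1 : (1%:M : 'M[C]_(2 * n)) \is unitarymx.
  by apply/unitarymxP; rewrite trmx1 map_mx1 mulmx1.
have a1 : adj (1%:M : 'M[C]_(2 * n)) = 1%:M by rewrite /adj trmx1 map_mx1.
exists n, 2%N, W, (Egf beta l), 1%:M, (@swapi n); split.
- by split.
- by exists j; apply: hj.
- move=> k k' hne; rewrite mulmx1 /adj (unitary_l (tens_unitary uWB uW)) mxE.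
  by case: (eqVneq k k') => [ek|]; [rewrite ek in hne|].
- exact: swapi_bij.
move=> rho; rewrite eg a1 mul1mx mulmx1 /replacer /ptrace.
apply/matrixP => i k; rewrite !mxE /mxtrace mulr_suml.
apply: eq_bigr => j' _; rewrite !mxE /swapi !mxtens.mxtens_indexK /=.
by [].
Qed.
End S6.
Section S7.
Variable R : realType.
Local Notation C := R[i].
Local Open Scope sesquilinear_scope.
Local Open Scope complex_scope.
Lemma tr_e1 : \tr (ket1bra1 R) = 1.
Proof. by rewrite /ket1bra1 /mxtrace !big_ord_recl big_ord0 !mxE /= add0r addr0. Qed.
Lemma tr_piM (M : R) : \tr (piM M) = 1.
Proof. rewrite /mxtrace !big_ord_recl big_ord0 !mxE /= rmorphB /=; ring. Qed.
Lemma parta_feas n (eps : R) (P E : set 'M[C]_n) w rho :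
  P rho -> tdist w rho <= eps -> E w -> forall M, 1 < M -> feasible eps P E M (replacer w).
Proof.
move=> Prho hwr Ew M hM; split.
  by exists rho; split => //; rewrite /replacer tr_e1 scale1r.
by move=> s [M' [hM' ->]]; rewrite /replacer tr_piM scale1r.
Qed.
Lemma parta_cost n (eps : R) (P E : set 'M[C]_n) w rho beta WB hB :
  P rho -> tdist w rho <= eps -> E w -> density n w -> 0 < beta -> WB \is unitarymx ->
  work_cost (thermal_op n beta WB hB) eps P E = 0%E.
Proof.
move=> Prho hwr Ew wd hb uWB.
rewrite /work_cost /=.
set S := [set M : R | _].
have eS : S = [set` Interval (BSide false (1 : R)) (BInfty R false)].
  apply/seteqP; split => x /=.
    by case=> hx _; rewrite in_itv /= hx.
  rewrite in_itv /= andbT => hx; split => //.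
  exists (replacer w); split; first exact: replacer_TO.
  exact: parta_feas Prho hwr Ew x hx.
rewrite eS; case: ifPn => [/asboolP h|_].
  have : [set` Interval (BSide false (1 : R)) (BInfty R false)] 2 by rewrite /= in_itv /= ltr1n.
  by rewrite h.
by rewrite inf_itv ?ln1.
Qed.
End S7.
Unset Implicit Arguments.
Theorem propositionS3 (R : realType) (n : nat) (eps : R)
  (P E : set 'M[R[i]]_n) :
  0 <= eps < 1 -> P `<=` density n -> E `<=` density n ->
  (* (a) *)
  ((ball_set eps P `&` E !=set0) ->
     (forall (beta : R) (WB : 'M[R[i]]_2) (hB : 'I_2 -> R),
        0 < beta -> WB \is unitarymx ->
        work_cost (thermal_op n beta WB hB) eps P E = 0%E) /\
     (exists tau, E tau /\
        (forall (beta : R) (WB : 'M[R[i]]_2) (hB : 'I_2 -> R),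
           0 < beta -> WB \is unitarymx -> thermal_op n beta WB hB (replacer tau)) /\
        (forall M : R, 1 < M -> feasible eps P E M (replacer tau)))) /\
  (* (b) *)
  ((eps%:E < tdist_sets P E)%E ->
     (rhs_b eps P E <= work_cost (GPL n) eps P E)%E).
Proof.
move=> /andP[he he1] hP hE; split; last exact: partb.
move=> [w [[wd [rho [Prho hwr]]] Ew]]; split.
  by move=> beta WB hB hb uWB; apply: parta_cost Prho hwr Ew wd hb uWB.
exists w; split => //; split.
  by move=> beta WB hB hb uWB; apply: replacer_TO.
exact: parta_feas Prho hwr Ew.
Qed.
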